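(* Let $\mathcal{M}=(W,R,V)$ be a Kripke model, let $\Gamma=(\mathrm{card}(W))^+$ be the successor cardinal of the cardinality of $W$, let $w\in W$ and let $\varphi$ be a sentence of the modal $\mu$-calculus. Then $\mathcal{M},w\vDash\varphi$ (standard semantics) if and only if $\mathcal{M},w\Vdash^\Gamma\varphi$, i.e. Eloise has a winning strategy in the $\Gamma$-bounded evaluation game $(\mathcal{M},w,\varphi,\Gamma)$.
   Context: Formulae: $\varphi ::= p \mid \neg p \mid X \mid \varphi\vee\varphi \mid \varphi\wedge\varphi \mid \Diamond\varphi \mid \Box\varphi \mid \mu X\varphi \mid \nu X\varphi$ ($p$ proposition symbols, $X$ label symbols). Standard semantics with assignments $s$ of subsets of $W$ to label symbols: atoms, $X$ (iff $w\in s(X)$), Boolean and modal connectives as usual; $\mathcal{M},w\vDash_s\mu X\psi$ (resp. $\nu X\psi$) iff $w$ belongs to the least (resp. greatest) fixed point of the monotone operator $A\mapsto\{v\in W\mid\mathcal{M},v\vDash_{s[A/X]}\psi\}$. For sentences truth is independent of $s$. $\mathcal{M},w\Vdash^\Gamma\varphi$ means Eloise has a winning strategy in the $\Gamma$-bounded evaluation game $(\mathcal{M},w,\varphi,\Gamma)$, defined as follows. Positions $(v,\theta,c)$ with $v\in W$, $\theta$ a subformula occurrence of $\varphi$, and $c$ a clock mapping from the occurrences of the form $\mu X\psi$ / $\nu X\psi$ in $\varphi$ to ordinals $\le\Gamma$; initially $(w,\varphi,c_0)$ with $c_0\equiv\Gamma$. At $p$ (resp. $\neg p$) Eloise wins iff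 $v\in V(p)$ (resp. $v\notin V(p)$), else Abelard; at $\vee$/$\Diamond$ Eloise chooses a disjunct / an $R$-successor (losing if there is none), at $\wedge$/$\Box$ Abelard chooses a conjunct / an $R$-successor (losing if there is none); at $\mu X\psi$ Eloise, at $\nu X\psi$ Abelard sets the clock of that occurrence to some $\gamma<\Gamma$ and play continues at $\psi$; at an atomic $X$ whose nearest binder $\mathrm{rf}(X)\in\{\mu X\psi,\nu X\psi\}$ has clock value $\gamma$: if $\gamma=0$ the binder's owner (Eloise for $\mu$, Abelard for $\nu$) loses; otherwise the owner chooses $\gamma'<\gamma$, the binder's clock becomes $\gamma'$, the clocks of all $\mu/\nu$-occurrences inside $\psi$ are reset to $\Gamma$, others unchanged, and play continues at $(v,\psi,\cdot)$. A winning strategy for Eloise is a function of positions prescribing her moves so that she wins every play following it. *)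

(* Defs.v *)
From Stdlib Require Import List Bool Arith.
Import ListNotations.

Inductive form : Type :=
| PAtom : nat -> form
| NAtom : nat -> form
| LVar  : nat -> form
| FOr   : form -> form -> form
| FAnd  : form -> form -> form
| FDia  : form -> form
| FBox  : form -> form
| FMu   : nat -> form -> form
| FNu   : nat -> form -> form.

Fixpoint closed_under (bd : list nat) (f : form) : Prop :=
  match f with
  | PAtom _ | NAtom _ => True
  | LVar X => In X bd
  | FOr a b | FAnd a b => closed_under bd a /\ closed_under bd b
  | FDia a | FBox a => closed_under bd a
  | FMu X a | FNu X a => closed_under (X :: bd) a
  end.

Definition sentence (f : form) : Prop := closed_under [] f.

Definition upd {W : Type} (s : nat -> W -> Prop) (X : nat) (A : W -> Prop)
  : nat -> W -> Prop := fun Y => if Nat.eqb Y X then A else s Y.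

Fixpoint sat {W : Type} (R : W -> W -> Prop) (V : nat -> W -> Prop)
  (s : nat -> W -> Prop) (f : form) (w : W) {struct f} : Prop :=
  match f with
  | PAtom p => V p w
  | NAtom p => ~ V p w
  | LVar X => s X w
  | FOr a b => sat R V s a w \/ sat R V s b w
  | FAnd a b => sat R V s a w /\ sat R V s b w
  | FDia a => exists v, R w v /\ sat R V s a v
  | FBox a => forall v, R w v -> sat R V s a v
  | FMu X a =>
      exists A : W -> Prop,
        (forall v, A v <-> sat R V (upd s X A) a v) /\
        (forall B : W -> Prop, (forall v, B v <-> sat R V (upd s X B) a v) ->
            forall v, A v -> B v) /\
        A w
  | FNu X a =>
      exists A : W -> Prop,
        (forall v, A v <-> sat R V (upd s X A) a v) /\
        (forall B : W -> Prop, (forall v, B v <-> sat R V (upd s X B) a v) ->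
            forall v, B v -> A v) /\
        A w
  end.

(* M, w |= phi for a sentence phi (truth independent of the assignment;
   we use the empty assignment). *)
Definition models {W : Type} (R : W -> W -> Prop) (V : nat -> W -> Prop)
  (w : W) (f : form) : Prop := sat R V (fun _ _ => False) f w.

(* (G, lt) is a well-order of order type card(W)^+ : the elements of G are
   the ordinals < Gamma. *)
Definition is_succ_card_of (W : Type) (G : Type) (lt : G -> G -> Prop) : Prop :=
  (forall a, ~ lt a a) /\
  (forall a b c, lt a b -> lt b c -> lt a c) /\
  (forall a b, lt a b \/ a = b \/ lt b a) /\
  well_founded lt /\
  (forall g : G, exists f : {x : G | lt x g} -> W,
      forall x y, f x = f y -> x = y) /\
  ~ (exists f : G -> W, forall x y, f x = f y -> x = y).

(* Clock values: ordinals <= Gamma, i.e. Some g (g < Gamma) or None (= Gamma). *)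
Definition clt {G : Type} (lt : G -> G -> Prop) (a b : option G) : Prop :=
  match a, b with
  | Some x, Some y => lt x y
  | Some _, None => True
  | None, _ => False
  end.

Definition child (f : form) (b : bool) : option form :=
  match f with
  | FOr a c | FAnd a c => Some (if b then c else a)
  | FDia a | FBox a | FMu _ a | FNu _ a => if b then None else Some a
  | _ => None
  end.

Fixpoint sub (f : form) (p : list bool) : option form :=
  match p with
  | [] => Some f
  | b :: p' => match child f b with Some g => sub g p' | None => None end
  end.

Definition binds (f : form) (X : nat) : bool :=
  match f with FMu Y _ | FNu Y _ => Nat.eqb Y X | _ => false end.

(* rf: path of the nearest binder of X strictly above the occurrence at p *)
Fixpoint rf (f : form) (p : list bool) (X : nat) : option (list bool) :=
  match p with
  | [] => None
  | b :: p' =>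
      match child f b with
      | None => None
      | Some g =>
          match rf g p' X with
          | Some q => Some (b :: q)
          | None => if binds f X then Some [] else None
          end
      end
  end.

Fixpoint prefixb (q r : list bool) : bool :=
  match q, r with
  | [], _ => true
  | a :: q', b :: r' => Bool.eqb a b && prefixb q' r'
  | _ :: _, [] => false
  end.

Definition path_eqb (q r : list bool) : bool := prefixb q r && prefixb r q.

(* A position: a world, a subformula occurrence (path into phi) and a clock,
   given as a map on all paths (only values at mu/nu occurrences matter). *)
Record pos (W G : Type) : Type := mkpos
  { pw : W; pp : list bool; pc : list bool -> option G }.
Arguments mkpos {W G}.
Arguments pw {W G}.
Arguments pp {W G}.
Arguments pc {W G}.

Section Game.
Context {W : Type} (R : W -> W -> Prop) (V : nat -> W -> Prop)
        {G : Type} (lt : G -> G -> Prop) (phi : form).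

(* Some b: terminal position, Eloise wins iff b. *)
Definition terminal (P : pos W G) : option Prop :=
  match sub phi (pp P) with
  | None => Some False
  | Some (PAtom q) => Some (V q (pw P))
  | Some (NAtom q) => Some (~ V q (pw P))
  | Some (LVar X) => match rf phi (pp P) X with
                     | None => Some False
                     | Some _ => None
                     end
  | _ => None
  end.

Definition eloise_turn (P : pos W G) : bool :=
  match sub phi (pp P) with
  | Some (FOr _ _) | Some (FDia _) | Some (FMu _ _) => true
  | Some (LVar X) =>
      match rf phi (pp P) X with
      | Some q => match sub phi q with Some (FMu _ _) => true | _ => false end
      | None => true
      end
  | _ => false
  end.

(* Legal moves.  A player with no legal move loses (no successor at a
   diamond/box; clock value 0 at an atomic X). *)
Definition move (P P' : pos W G) : Prop :=
  match sub phi (pp P) with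
  | Some (FOr _ _) | Some (FAnd _ _) =>
      pw P' = pw P /\ (forall r, pc P' r = pc P r) /\
      (pp P' = pp P ++ [false] \/ pp P' = pp P ++ [true])
  | Some (FDia _) | Some (FBox _) =>
      R (pw P) (pw P') /\ pp P' = pp P ++ [false] /\ (forall r, pc P' r = pc P r)
  | Some (FMu _ _) | Some (FNu _ _) =>
      pw P' = pw P /\ pp P' = pp P ++ [false] /\
      exists g : G, forall r,
        pc P' r = if path_eqb r (pp P) then Some g else pc P r
  | Some (LVar X) =>
      match rf phi (pp P) X with
      | Some q =>
          pw P' = pw P /\ pp P' = q ++ [false] /\
          exists g : G, clt lt (Some g) (pc P q) /\
            forall r, pc P' r =
              if path_eqb r q then Some g
              else if prefixb (q ++ [false]) r then None
              else pc P r
      | None => False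
      end
  | _ => False
  end.

Inductive ewins (sigma : pos W G -> pos W G) : pos W G -> Prop :=
| ew_term : forall P (b : Prop), terminal P = Some b -> b -> ewins sigma P
| ew_eloise : forall P, terminal P = None -> eloise_turn P = true ->
    move P (sigma P) -> ewins sigma (sigma P) -> ewins sigma P
| ew_abelard : forall P, terminal P = None -> eloise_turn P = false ->
    (forall P', move P P' -> ewins sigma P') -> ewins sigma P.

Definition game_holds (w : W) : Prop :=
  exists sigma : pos W G -> pos W G,
    ewins sigma (mkpos w [] (fun _ => None)).

End Game.

(* Main.v *)
Require Import Defs.
From Stdlib Require Import List Bool Arith Lia Wellfounded Classical ClassicalEpsilon FunctionalExtensionality PropExtensionality.
Import ListNotations.

Lemma prefixb_app r t : prefixb r (r ++ t) = true.
Proof. induction r; simpl; auto. rewrite IHr, eqb_reflx. reflexivity. Qed.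

Lemma prefixb_spec r s : prefixb r s = true -> exists t, s = r ++ t.
Proof.
  revert s; induction r as [|a r IHr]; intros s H.
  - exists s. reflexivity.
  - destruct s as [|b s]; simpl in H; [discriminate|].
    apply andb_true_iff in H as [H1 H2]. apply eqb_prop in H1. subst.
    destruct (IHr s H2) as [t ->]. exists t. reflexivity.
Qed.

Lemma prefixb_len r s : prefixb r s = true -> length r <= length s.
Proof. intro H. destruct (prefixb_spec _ _ H) as [t ->]. rewrite length_app. lia. Qed.

Lemma path_eqb_true r q : path_eqb r q = true -> r = q.
Proof.
  unfold path_eqb. intro H. apply andb_true_iff in H as [H1 H2].
  destruct (prefixb_spec _ _ H1) as [t Ht].
  apply prefixb_len in H2. subst q. rewrite length_app in H2.
  destruct t; [rewrite app_nil_r; reflexivity|simpl in H2; lia].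
Qed.

Lemma path_eqb_refl q : path_eqb q q = true.
Proof. unfold path_eqb. assert (H : prefixb q q = true) by (induction q; simpl; auto; rewrite IHq, eqb_reflx; auto).
  rewrite H. reflexivity. Qed.

Lemma path_eqb_short r q : length r < length q -> path_eqb r q = false.
Proof. intro H. destruct (path_eqb r q) eqn:E; auto. apply path_eqb_true in E. subst. lia. Qed.

Lemma prefixb_short r q : length r < length q -> prefixb q r = false.
Proof. intro H. destruct (prefixb q r) eqn:E; auto. apply prefixb_len in E. lia. Qed.

Lemma sub_app f p p' : sub f (p ++ p') = match sub f p with Some g => sub g p' | None => None end.
Proof. revert f; induction p; intros f; simpl; auto. destruct (child f a); auto. Qed.

Fixpoint fsize (f : form) : nat :=
  match f with
  | FOr a b | FAnd a b => S (fsize a + fsize b)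
  | FDia a | FBox a | FMu _ a | FNu _ a => S (fsize a)
  | _ => 0
  end.

Lemma sub_len f p g : sub f p = Some g -> length p <= fsize f.
Proof.
  revert f; induction p as [|b p IH]; intros f H; simpl; [lia|].
  simpl in H. destruct (child f b) eqn:Hc; [|discriminate].
  apply IH in H. destruct f; simpl in Hc; try discriminate; destruct b; inversion Hc; subst; simpl; lia.
Qed.

Lemma firstn_pre {A} i (q t : list A) : i <= length q -> firstn i (q ++ t) = firstn i q.
Proof. intro H. rewrite firstn_app. replace (i - length q) with 0 by lia. simpl. apply app_nil_r. Qed.

Lemma rf_spec f p X q : rf f p X = Some q ->
  exists g a t, sub f q = Some g /\ binds g X = true /\ child g false = Some a /\ p = q ++ false :: t.
Proof.
  revert f q; induction p as [|b p IH]; intros f q H; simpl in H; [discriminate|].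
  destruct (child f b) eqn:Hc; [|discriminate].
  destruct (rf f0 p X) eqn:Hr.
  - inversion H; subst. destruct (IH _ _ Hr) as (g & a & t & H1 & H2 & H3 & H4).
    exists g, a, t. simpl. rewrite Hc. subst. auto.
  - destruct (binds f X) eqn:Hb; inversion H; subst.
    exists f, f0, p. simpl. split; auto. split; auto.
    destruct f; simpl in Hb; try discriminate; destruct b; simpl in Hc; try discriminate; auto.
Qed.

Lemma closed_none X p : forall f bd, closed_under bd f -> sub f p = Some (LVar X) -> rf f p X = None -> In X bd.
Proof.
  induction p as [|b p IH]; intros f bd Hc Hs Hr.
  - simpl in Hs; inversion Hs; subst; simpl in Hc; exact Hc.
  - simpl in Hs, Hr. destruct (child f b) eqn:Hch; [|discriminate].
    destruct (rf f0 p X) eqn:Hr0; [discriminate|].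
    destruct f; simpl in Hch; try discriminate; destruct b; inversion Hch; subst; simpl in Hc, Hr;
      try (apply (IH f0 bd); tauto; fail); try discriminate.
    + destruct (Nat.eqb n X) eqn:E; [discriminate|].
      pose proof (IH _ _ Hc Hs Hr0) as HI. destruct HI; auto. subst. rewrite Nat.eqb_refl in E; discriminate.
    + destruct (Nat.eqb n X) eqn:E; [discriminate|].
      pose proof (IH _ _ Hc Hs Hr0) as HI. destruct HI; auto. subst. rewrite Nat.eqb_refl in E; discriminate.
Qed.

Section KT.
Context {W : Type} (F : (W -> Prop) -> (W -> Prop)).
Context (Fmono : forall A B : W -> Prop, (forall v, A v -> B v) -> forall v, F A v -> F B v).

Definition lfp : W -> Prop := fun v => forall B, (forall u, F B u -> B u) -> B v.
Definition gfp : W -> Prop := fun v => exists B, (forall u, B u -> F B u) /\ B v.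

Lemma lfp_least B : (forall u, F B u -> B u) -> forall v, lfp v -> B v.
Proof. intros H v Hv. apply Hv, H. Qed.
Lemma lfp_fold v : F lfp v -> lfp v.
Proof. intros H B HB. apply HB. apply (Fmono lfp); auto. intros u Hu. apply Hu, HB. Qed.
Lemma lfp_unfold v : lfp v -> F lfp v.
Proof. intro H. apply H. intros u Hu. apply (Fmono (F lfp)); auto. apply lfp_fold. Qed.

Lemma gfp_greatest B : (forall u, B u -> F B u) -> forall v, B v -> gfp v.
Proof. intros H v Hv. exists B; auto. Qed.
Lemma gfp_unfold v : gfp v -> F gfp v.
Proof. intros [B [HB Hv]]. apply (Fmono B). intros u Hu; exists B; auto. auto. Qed.
Lemma gfp_fold v : F gfp v -> gfp v.
Proof. intro H. exists (F gfp). split; auto. intros u Hu. apply (Fmono gfp); auto. apply gfp_unfold. Qed.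
End KT.

Section Sem.
Context {W : Type} (R : W -> W -> Prop) (V : nat -> W -> Prop).

Definition Fop (s : nat -> W -> Prop) X a : (W -> Prop) -> (W -> Prop) :=
  fun B v => sat R V (upd s X B) a v.

Definition smono (a : form) := forall s s' : nat -> W -> Prop, (forall Y v, s Y v -> s' Y v) ->
  forall v, sat R V s a v -> sat R V s' a v.

Lemma upd_mono (s s' : nat -> W -> Prop) X (A B : W -> Prop) :
  (forall Y v, s Y v -> s' Y v) -> (forall v, A v -> B v) -> forall Y v, upd s X A Y v -> upd s' X B Y v.
Proof. intros H1 H2 Y v. unfold upd. destruct (Nat.eqb Y X); auto. Qed.

Lemma Fop_mono_gen a : smono a -> forall s X A B, (forall v, A v -> B v) -> forall v, Fop s X a A v -> Fop s X a B v.
Proof. intros Ha s X A B H v. unfold Fop. apply Ha. apply upd_mono; auto. Qed.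

Lemma char_mu a X : smono a -> forall s v, sat R V s (FMu X a) v <-> lfp (Fop s X a) v.
Proof.
  intros Ha s v. pose proof (Fop_mono_gen a Ha s X) as Hm. simpl. split.
  - intros [A [Hfix [Hleast HA]]]. apply (Hleast (lfp (Fop s X a))); auto.
    intro u; split; [apply (lfp_unfold (Fop s X a) Hm) | apply (lfp_fold (Fop s X a) Hm)].
  - intro H. exists (lfp (Fop s X a)). split; [|split; auto].
    + intro u; split; [apply (lfp_unfold (Fop s X a) Hm) | apply (lfp_fold (Fop s X a) Hm)].
    + intros B HB u Hu. apply (lfp_least (Fop s X a) B); auto. intros u' Hu'. apply HB. exact Hu'.
Qed.

Lemma char_nu a X : smono a -> forall s v, sat R V s (FNu X a) v <-> gfp (Fop s X a) v.
Proof.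
  intros Ha s v. pose proof (Fop_mono_gen a Ha s X) as Hm. simpl. split.
  - intros [A [Hfix [Hgr HA]]]. apply (gfp_greatest (Fop s X a) A); auto. intros u Hu. apply Hfix. exact Hu.
  - intro H. exists (gfp (Fop s X a)). split; [|split; auto].
    + intro u; split; [apply (gfp_unfold (Fop s X a) Hm) | apply (gfp_fold (Fop s X a) Hm)].
    + intros B HB u Hu. apply (gfp_greatest (Fop s X a) B); auto. intros u' Hu'. apply HB. exact Hu'.
Qed.

Lemma sat_mono f : smono f.
Proof.
  induction f; intros s s' Hs v H; simpl in *; auto.
  - destruct H; [left|right]; eauto.
  - destruct H; split; eauto.
  - destruct H as [u [Hu H]]; exists u; split; eauto.
  - intros u Hu; eauto.
  - apply (char_mu f n IHf) in H. apply (char_mu f n IHf).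
    apply (lfp_least (Fop s n f) (lfp (Fop s' n f))); auto.
    intros u Hu. apply (lfp_fold (Fop s' n f) (Fop_mono_gen f IHf s' n)).
    unfold Fop in *. apply (IHf (upd s n (lfp (Fop s' n f)))); auto. apply upd_mono; auto.
  - apply (char_nu f n IHf) in H. apply (char_nu f n IHf).
    apply (gfp_greatest (Fop s' n f) (gfp (Fop s n f))); auto.
    intros u Hu. apply (gfp_unfold (Fop s n f) (Fop_mono_gen f IHf s n)) in Hu.
    unfold Fop in *. apply (IHf (upd s n (gfp (Fop s n f)))); auto. apply upd_mono; auto.
Qed.

Lemma Fop_mono s X a A B : (forall v, A v -> B v) -> forall v, Fop s X a A v -> Fop s X a B v.
Proof. apply Fop_mono_gen, sat_mono. Qed.

End Sem.

Section Appr.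
Context {W : Type} (R : W -> W -> Prop) (V : nat -> W -> Prop).
Context {G : Type} (lt : G -> G -> Prop) (Hwf : well_founded lt).

Definition Sg (s : nat -> W -> Prop) X a : G -> W -> Prop :=
  Fix Hwf (fun _ => W -> Prop)
    (fun g rec v => exists b (h : lt b g), Fop R V s X a (rec b h) v).
Definition Tg (s : nat -> W -> Prop) X a : G -> W -> Prop :=
  Fix Hwf (fun _ => W -> Prop)
    (fun g rec v => forall b (h : lt b g), Fop R V s X a (rec b h) v).

Lemma Sg_iff s X a g v : Sg s X a g v <-> exists b, lt b g /\ Fop R V s X a (Sg s X a b) v.
Proof.
  unfold Sg at 1. rewrite Fix_eq.
  - split; intros [b [h H]]; exists b; [split; auto | exists h; auto].
  - intros x f1 f2 Hf. apply functional_extensionality; intro u.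
    apply propositional_extensionality; split; intros [b [h H]]; exists b, h;
      [rewrite <- Hf | rewrite Hf]; exact H.
Qed.

Lemma Tg_iff s X a g v : Tg s X a g v <-> forall b, lt b g -> Fop R V s X a (Tg s X a b) v.
Proof.
  unfold Tg at 1. rewrite Fix_eq.
  - split; intros H b h; exact (H b h).
  - intros x f1 f2 Hf. apply functional_extensionality; intro u.
    apply propositional_extensionality; split; intros H b h;
      [rewrite <- Hf | rewrite Hf]; apply H.
Qed.

Definition apx_mu s X a (o : option G) : W -> Prop :=
  match o with Some g => Sg s X a g | None => lfp (Fop R V s X a) end.
Definition apx_nu s X a (o : option G) : W -> Prop :=
  match o with Some g => Tg s X a g | None => gfp (Fop R V s X a) end.

Definition node_upd (f : form) (s : nat -> W -> Prop) (o : option G) : nat -> W -> Prop :=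
  match f with
  | FMu X a => upd s X (apx_mu s X a o)
  | FNu X a => upd s X (apx_nu s X a o)
  | _ => s
  end.

Fixpoint env (f : form) (s : nat -> W -> Prop) (p : list bool) (c : list bool -> option G)
  : nat -> W -> Prop :=
  match p with
  | [] => s
  | b :: p' => match child f b with
               | Some g => env g (node_upd f s (c [])) p' (fun r => c (b :: r))
               | None => s
               end
  end.

Lemma env_snoc f s p c b g h : sub f p = Some g -> child g b = Some h ->
  env f s (p ++ [b]) c = node_upd g (env f s p c) (c p).
Proof.
  revert f s c; induction p as [|a p IH]; intros f s c Hs Hc; simpl in *.
  - inversion Hs; subst. rewrite Hc. reflexivity.
  - destruct (child f a) eqn:Hca; [|discriminate]. apply IH; auto.
Qed.

Lemma env_ext f s p c c' : (forall r t, p = r ++ t -> t <> [] -> c r = c' r) ->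
  env f s p c = env f s p c'.
Proof.
  revert f s c c'; induction p as [|b p IH]; intros f s c c' H; simpl; auto.
  destruct (child f b); auto.
  rewrite (H [] (b :: p)); auto; try discriminate.
  apply IH. intros r t Hr Ht. apply (H (b :: r) t); auto. simpl; rewrite Hr; auto.
Qed.

Lemma node_upd_nb f s o X : binds f X = false -> node_upd f s o X = s X.
Proof.
  intro H. destruct f; simpl in *; auto; unfold upd; rewrite Nat.eqb_sym, H; auto.
Qed.

Lemma env_rf_none f s p c X : rf f p X = None -> env f s p c X = s X.
Proof.
  revert f s c; induction p as [|b p IH]; intros f s c H; simpl in *; auto.
  destruct (child f b) eqn:Hc; auto.
  destruct (rf f0 p X) eqn:Hr; [discriminate|].
  destruct (binds f X) eqn:Hb; [discriminate|].
  rewrite IH; auto. apply node_upd_nb; auto.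
Qed.

Lemma env_rf f s p c X q g : rf f p X = Some q -> sub f q = Some g ->
  env f s p c X = node_upd g (env f s q c) (c q) X.
Proof.
  revert f s c q; induction p as [|b p IH]; intros f s c q H Hq; simpl in H; [discriminate|].
  destruct (child f b) eqn:Hc; [|discriminate]. simpl.
  rewrite Hc.
  destruct (rf f0 p X) eqn:Hr.
  - inversion H; subst. simpl in Hq. rewrite Hc in Hq.
    rewrite (IH _ _ _ _ Hr Hq). simpl. rewrite Hc. reflexivity.
  - destruct (binds f X); inversion H; subst. simpl in Hq. inversion Hq; subst.
    rewrite env_rf_none; auto.
Qed.

Lemma Sg_lfp s X a : forall g v, Sg s X a g v -> lfp (Fop R V s X a) v.
Proof.
  intro g. induction g as [g IH] using (well_founded_ind Hwf). intros v H.
  apply Sg_iff in H as [b [Hb H]].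
  apply (lfp_fold _ (Fop_mono R V s X a)). apply (Fop_mono R V s X a (Sg s X a b)); auto.
  apply IH; auto.
Qed.

Lemma FSg_lfp s X a g v : Fop R V s X a (Sg s X a g) v -> lfp (Fop R V s X a) v.
Proof.
  intro H. apply (lfp_fold _ (Fop_mono R V s X a)). apply (Fop_mono R V s X a (Sg s X a g)); auto.
  apply Sg_lfp.
Qed.

Lemma gfp_Tg s X a : forall g v, gfp (Fop R V s X a) v -> Tg s X a g v.
Proof.
  intro g. induction g as [g IH] using (well_founded_ind Hwf). intros v H.
  apply Tg_iff. intros b Hb.
  apply (gfp_unfold _ (Fop_mono R V s X a)) in H.
  apply (Fop_mono R V s X a (gfp (Fop R V s X a))); auto.
  all: try (apply IH; auto).
Qed.

Lemma gfp_FTg s X a g v : gfp (Fop R V s X a) v -> Fop R V s X a (Tg s X a g) v.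
Proof.
  intro H. apply (gfp_unfold _ (Fop_mono R V s X a)) in H.
  apply (Fop_mono R V s X a (gfp (Fop R V s X a))); auto.
  intros u Hu; apply gfp_Tg; auto.
Qed.

Context (Htri : forall a b, lt a b \/ a = b \/ lt b a)
        (Hninj : ~ (exists f : G -> W, forall x y, f x = f y -> x = y)).

Lemma choose_fun (P : G -> W -> Prop) : (forall g, exists x, P g x) -> exists f : G -> W, forall g, P g (f g).
Proof.
  intro H. exists (fun g => proj1_sig (constructive_indefinite_description _ (H g))).
  intro g. destruct (constructive_indefinite_description _ (H g)); auto.
Qed.

Lemma Sg_stab s X a : exists d, forall v, Fop R V s X a (Sg s X a d) v -> Sg s X a d v.
Proof.
  apply NNPP. intro Hn.
  assert (H : forall d, exists x, Fop R V s X a (Sg s X a d) x /\ ~ Sg s X a d x).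
  { intro d. apply NNPP. intro H1. apply Hn. exists d. intros v Hv. apply NNPP. intro H2.
    apply H1. exists v. auto. }
  apply choose_fun in H as [f Hf]. apply Hninj. exists f. intros x y Hxy.
  destruct (Htri x y) as [Hl|[He|Hl]]; auto; exfalso.
  - destruct (Hf y) as [_ Hy]. apply Hy. apply Sg_iff. exists x. split; auto.
    rewrite <- Hxy. apply Hf.
  - destruct (Hf x) as [_ Hx]. apply Hx. apply Sg_iff. exists y. split; auto.
    rewrite Hxy. apply Hf.
Qed.

Lemma lfp_FSg s X a v : lfp (Fop R V s X a) v -> exists g, Fop R V s X a (Sg s X a g) v.
Proof.
  intro H. destruct (Sg_stab s X a) as [d Hd].
  apply (lfp_least _ (Sg s X a d) Hd) in H. apply Sg_iff in H as [b [_ Hb]]. eauto.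
Qed.

Lemma Tg_stab s X a : exists d, forall v, Tg s X a d v -> Fop R V s X a (Tg s X a d) v.
Proof.
  apply NNPP. intro Hn.
  assert (H : forall d, exists x, Tg s X a d x /\ ~ Fop R V s X a (Tg s X a d) x).
  { intro d. apply NNPP. intro H1. apply Hn. exists d. intros v Hv. apply NNPP. intro H2.
    apply H1. exists v. auto. }
  apply choose_fun in H as [f Hf]. apply Hninj. exists f. intros x y Hxy.
  destruct (Htri x y) as [Hl|[He|Hl]]; auto; exfalso.
  - destruct (Hf x) as [_ Hx]. apply Hx. rewrite Hxy.
    destruct (Hf y) as [Hy _]. exact (proj1 (Tg_iff _ _ _ _ _) Hy x Hl).
  - destruct (Hf y) as [_ Hy]. apply Hy. rewrite <- Hxy.
    destruct (Hf x) as [Hx _]. exact (proj1 (Tg_iff _ _ _ _ _) Hx y Hl).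
Qed.

Lemma FTg_gfp s X a v : (forall g, Fop R V s X a (Tg s X a g) v) -> gfp (Fop R V s X a) v.
Proof.
  intro H. destruct (Tg_stab s X a) as [d Hd].
  apply (gfp_fold _ (Fop_mono R V s X a)).
  apply (Fop_mono R V s X a (Tg s X a d)); auto.
  apply (gfp_greatest _ (Tg s X a d) Hd).
Qed.

End Appr.

Definition lexN {A} (r : A -> A -> Prop) (N : nat) (f g : nat -> A) : Prop :=
  exists k, k < N /\ (forall i, i < k -> f i = g i) /\ r (f k) (g k).

Lemma wf_lexN {A} (r : A -> A -> Prop) : well_founded r -> forall N, well_founded (lexN r N).
Proof.
  intros Hr N. induction N as [|N IH]; intro f.
  - constructor. intros g [k [Hk _]]. lia.
  - assert (Hmain: forall a, Acc r a -> forall t, Acc (lexN r N) t -> forall f, f 0 = a ->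
              (forall i, f (S i) = t i) -> Acc (lexN r (S N)) f).
    { intros a Ha. induction Ha as [a _ IHa]. intros t Ht. induction Ht as [t _ IHt].
      intros f0 H0 HS. constructor. intros g [k [Hk [Heq Hlt]]].
      destruct k as [|k].
      + rewrite H0 in Hlt. apply (IHa (g 0) Hlt (fun i => g (S i)) (IH _) g eq_refl (fun i => eq_refl)).
      + apply (IHt (fun i => g (S i))).
        * exists k. split; [lia|]. split.
          -- intros i Hi. rewrite <- HS. apply Heq. lia.
          -- rewrite <- HS. exact Hlt.
        * rewrite Heq by lia. exact H0.
        * intro i; reflexivity. }
    apply (Hmain (f 0) (Hr _) (fun i => f (S i)) (IH _) f eq_refl (fun i => eq_refl)).
Qed.

Lemma wf_clt {G} (lt : G -> G -> Prop) : well_founded lt -> well_founded (clt lt).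
Proof.
  intros H o. assert (HS: forall g, Acc (clt lt) (Some g)).
  { intro g. induction (H g) as [g _ IHg]. constructor.
    intros [y|] Hy; simpl in Hy; [apply IHg; exact Hy | contradiction]. }
  destruct o as [g|]; [apply HS|]. constructor. intros [y|] Hy; [apply HS | contradiction].
Qed.

Section GameProof.
Context {W : Type} (R : W -> W -> Prop) (V : nat -> W -> Prop).
Context {G : Type} (lt : G -> G -> Prop) (Hwf : well_founded lt).
Context (Htri : forall a b, lt a b \/ a = b \/ lt b a)
        (Hninj : ~ (exists f : G -> W, forall x y, f x = f y -> x = y)).
Context (phi : form) (Hphi : sentence phi).

Definition s0 : nat -> W -> Prop := fun _ _ => False.
Definition E p c := env R V lt Hwf phi s0 p c.

Definition Inv (P : pos W G) : Prop :=
  exists psi, sub phi (pp P) = Some psi /\ sat R V (E (pp P) (pc P)) psi (pw P).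

Definition isbind (o : option form) : bool :=
  match o with Some (FMu _ _) | Some (FNu _ _) => true | _ => false end.

Definition meas (P : pos W G) (i : nat) : option (option G) :=
  if i <? length (pp P) then
    Some (if isbind (sub phi (firstn i (pp P))) then pc P (firstn i (pp P)) else None)
  else None.

Definition smaller (P' P : pos W G) : Prop :=
  lexN (clt (clt lt)) (S (fsize phi)) (meas P') (meas P).

Lemma wf_smaller : well_founded smaller.
Proof.
  unfold smaller. apply (wf_inverse_image _ _ (lexN (clt (clt lt)) (S (fsize phi))) meas).
  apply wf_lexN. apply wf_clt, wf_clt, Hwf.
Qed.

Definition clk_bind (c : list bool -> option G) p b : list bool -> option G :=
  fun r => if path_eqb r p then Some b else c r.
Definition clk_loop (c : list bool -> option G) q b : list bool -> option G :=
  fun r => if path_eqb r q then Some b else if prefixb (q ++ [false]) r then None else c r.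

Lemma len_pre (r t q : list bool) : q = r ++ t -> t <> [] -> length r < length q.
Proof. intros -> Ht. rewrite length_app. destruct t; [congruence|simpl; lia]. Qed.

Lemma env_bind p c b g a : sub phi p = Some g -> child g false = Some a ->
  E (p ++ [false]) (clk_bind c p b) = node_upd R V lt Hwf g (E p c) (Some b).
Proof.
  intros Hs Hc. unfold E. erewrite env_snoc by eauto.
  unfold clk_bind at 2. rewrite path_eqb_refl. f_equal.
  apply env_ext. intros r t Hr Ht. unfold clk_bind. rewrite path_eqb_short; auto.
  eapply len_pre; eauto.
Qed.

Lemma env_loop q c b g a : sub phi q = Some g -> child g false = Some a ->
  E (q ++ [false]) (clk_loop c q b) = node_upd R V lt Hwf g (E q c) (Some b).
Proof.
  intros Hs Hc. unfold E. erewrite env_snoc by eauto.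
  unfold clk_loop at 2. rewrite path_eqb_refl. f_equal.
  apply env_ext. intros r t Hr Ht. unfold clk_loop.
  pose proof (len_pre _ _ _ Hr Ht).
  rewrite path_eqb_short; auto. rewrite prefixb_short; auto. rewrite length_app; simpl; lia.
Qed.

Lemma env_desc p c bb g a : sub phi p = Some g -> child g bb = Some a -> isbind (Some g) = false ->
  E (p ++ [bb]) c = E p c.
Proof.
  intros Hs Hc Hb. unfold E. erewrite env_snoc by eauto.
  destruct g; simpl in Hb; try discriminate; reflexivity.
Qed.

Lemma ltb_t i n : i < n -> (i <? n) = true.
Proof. apply Nat.ltb_lt. Qed.
Lemma ltb_f i n : n <= i -> (i <? n) = false.
Proof. apply Nat.ltb_ge. Qed.

Lemma desc_smaller v v' p c c' bb g : sub phi p = Some g ->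
  (forall r, length r < length p -> c' r = c r) ->
  smaller (mkpos v' (p ++ [bb]) c') (mkpos v p c).
Proof.
  intros Hs Hc. exists (length p). split; [apply sub_len in Hs; lia|]. split.
  - intros i Hi. unfold meas; simpl. rewrite length_app. simpl.
    rewrite ltb_t by lia. rewrite ltb_t by lia. rewrite firstn_pre by lia.
    rewrite Hc; auto. rewrite length_firstn. lia.
  - unfold meas; simpl. rewrite length_app. simpl.
    rewrite ltb_t by lia. rewrite ltb_f by lia. simpl. exact I.
Qed.

Lemma loop_smaller v v' p q t c b g : p = q ++ false :: t -> sub phi q = Some g ->
  isbind (Some g) = true -> clt lt (Some b) (c q) ->
  smaller (mkpos v' (q ++ [false]) (clk_loop c q b)) (mkpos v p c).
Proof.
  intros Hp Hs Hb Hlt. exists (length q). split; [apply sub_len in Hs; lia|]. split.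
  - intros i Hi. unfold meas; simpl. subst p. rewrite !length_app. simpl.
    rewrite ltb_t by lia. rewrite ltb_t by lia. rewrite !firstn_pre by lia.
    unfold clk_loop.
    rewrite path_eqb_short by (rewrite length_firstn; lia).
    rewrite prefixb_short by (rewrite length_firstn, length_app; simpl; lia). reflexivity.
  - unfold meas; simpl. subst p. rewrite !length_app. simpl.
    rewrite ltb_t by lia. rewrite ltb_t by lia. rewrite !firstn_pre by lia.
    rewrite firstn_all. rewrite Hs, Hb. unfold clk_loop. rewrite path_eqb_refl. simpl. exact Hlt.
Qed.

Definition good (P P' : pos W G) := move R lt phi P P' /\ Inv P' /\ smaller P' P.

Definition sigma (P : pos W G) : pos W G :=
  match excluded_middle_informative (exists P', good P P') with
  | left H => proj1_sig (constructive_indefinite_description _ H)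
  | right _ => P
  end.

Lemma sigma_spec P : (exists P', good P P') -> good P (sigma P).
Proof.
  intro H. unfold sigma. destruct (excluded_middle_informative _) as [H'|H']; [|contradiction].
  destruct (constructive_indefinite_description _ H') as [P' HP']; simpl; exact HP'.
Qed.

Lemma eloise_step P : terminal V phi P = None -> eloise_turn phi P = true ->
  (exists P', good P P') -> (forall P', Inv P' -> smaller P' P -> ewins R V lt phi sigma P') ->
  ewins R V lt phi sigma P.
Proof.
  intros H1 H2 H3 IH. destruct (sigma_spec P H3) as [Hm [Hi Hsm]].
  apply ew_eloise; auto.
Qed.

Lemma abelard_step P : terminal V phi P = None -> eloise_turn phi P = false ->
  (forall P', move R lt phi P P' -> Inv P' /\ smaller P' P) ->
  (forall P', Inv P' -> smaller P' P -> ewins R V lt phi sigma P') ->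
  ewins R V lt phi sigma P.
Proof.
  intros H1 H2 H3 IH. apply ew_abelard; auto. intros P' HP'. destruct (H3 P' HP'). auto.
Qed.


Lemma fwd : forall P, Inv P -> ewins R V lt phi sigma P.
Proof.
  intro P. induction P as [P IH] using (well_founded_ind wf_smaller).
  intros [psi [Hs Hsat]]. destruct P as [v p c]; simpl in *.
  destruct psi.
  - eapply ew_term; [unfold terminal; simpl; rewrite Hs; reflexivity | exact Hsat].
  - eapply ew_term; [unfold terminal; simpl; rewrite Hs; reflexivity | exact Hsat].
  - destruct (rf phi p n) eqn:Hr.
    2:{ exfalso. exact (closed_none n p phi [] Hphi Hs Hr). }
    destruct (rf_spec _ _ _ _ Hr) as (g & a & t & Hq & Hb & Hc & Hp).
    simpl in Hsat. unfold E in Hsat. erewrite env_rf in Hsat by eauto.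
    destruct g; simpl in Hb; try discriminate; apply Nat.eqb_eq in Hb; subst n0;
      simpl in Hc; inversion Hc; subst g; simpl in Hsat; unfold upd in Hsat;
      rewrite Nat.eqb_refl in Hsat.
    +
      assert (Hex: exists b, clt lt (Some b) (c l) /\
                 Fop R V (E l c) n a (Sg R V lt Hwf (E l c) n a b) v).
      { destruct (c l) as [gm|]; simpl in Hsat.
        - apply Sg_iff in Hsat. destruct Hsat as [b [Hb Hf]]. eauto.
        - destruct (lfp_FSg R V lt Hwf Htri Hninj _ _ _ _ Hsat) as [b Hf]. exists b. simpl. auto. }
      destruct Hex as [b [Hlt Hf]].
      apply eloise_step.
      * unfold terminal; simpl; rewrite Hs, Hr; reflexivity.
      * unfold eloise_turn; simpl; rewrite Hs, Hr, Hq; reflexivity.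
      * exists (mkpos v (l ++ [false]) (clk_loop c l b)). split; [|split].
        -- unfold move; simpl; rewrite Hs, Hr. split; auto. split; auto. exists b; split; auto.
        -- exists a. simpl. split. rewrite sub_app, Hq; reflexivity.
           erewrite env_loop by eauto. simpl. exact Hf.
        -- eapply loop_smaller; eauto.
      * intros; apply IH; auto.
    +
      apply abelard_step.
      * unfold terminal; simpl; rewrite Hs, Hr; reflexivity.
      * unfold eloise_turn; simpl; rewrite Hs, Hr, Hq; reflexivity.
      * intros [v' p' c'] HM. unfold move in HM; simpl in HM; rewrite Hs, Hr in HM.
        destruct HM as [-> [-> [b [Hlt Hcl]]]].
        assert (c' = clk_loop c l b) by (apply functional_extensionality; exact Hcl). subst c'.
        split; [|eapply loop_smaller; eauto].
        exists a. simpl. split. rewrite sub_app, Hq; reflexivity.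
        erewrite env_loop by eauto. simpl.
        destruct (c l) as [gm|]; simpl in Hsat, Hlt.
        -- exact (proj1 (Tg_iff R V lt Hwf _ _ _ _ _) Hsat b Hlt).
        -- apply gfp_FTg; auto.
      * intros; apply IH; auto.
  -
    apply eloise_step.
    + unfold terminal; simpl; rewrite Hs; reflexivity.
    + unfold eloise_turn; simpl; rewrite Hs; reflexivity.
    + destruct Hsat as [H|H].
      * exists (mkpos v (p ++ [false]) c). split; [|split].
        -- unfold move; simpl; rewrite Hs. auto.
        -- exists psi1. simpl. rewrite sub_app, Hs. split; auto.
           erewrite env_desc by (eauto; reflexivity). exact H.
        -- eapply desc_smaller; eauto.
      * exists (mkpos v (p ++ [true]) c). split; [|split].
        -- unfold move; simpl; rewrite Hs. auto.
        -- exists psi2. simpl. rewrite sub_app, Hs. split; auto.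
           erewrite env_desc by (eauto; reflexivity). exact H.
        -- eapply desc_smaller; eauto.
    + intros; apply IH; auto.
  -
    apply abelard_step.
    + unfold terminal; simpl; rewrite Hs; reflexivity.
    + unfold eloise_turn; simpl; rewrite Hs; reflexivity.
    + intros [v' p' c'] HM. unfold move in HM; simpl in HM; rewrite Hs in HM.
      destruct HM as [-> [Hcl Hpp]].
      assert (c' = c) by (apply functional_extensionality; exact Hcl). subst c'.
      destruct Hsat as [H1 H2].
      destruct Hpp as [-> | ->]; (split; [|eapply desc_smaller; eauto]).
      * exists psi1. simpl. rewrite sub_app, Hs. split; auto.
        erewrite env_desc by (eauto; reflexivity). exact H1.
      * exists psi2. simpl. rewrite sub_app, Hs. split; auto.
        erewrite env_desc by (eauto; reflexivity). exact H2.
    + intros; apply IH; auto.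
  -
    apply eloise_step.
    + unfold terminal; simpl; rewrite Hs; reflexivity.
    + unfold eloise_turn; simpl; rewrite Hs; reflexivity.
    + destruct Hsat as [u [Hu H]].
      exists (mkpos u (p ++ [false]) c). split; [|split].
      * unfold move; simpl; rewrite Hs. auto.
      * exists psi. simpl. rewrite sub_app, Hs. split; auto.
        erewrite env_desc by (eauto; reflexivity). exact H.
      * eapply desc_smaller; eauto.
    + intros; apply IH; auto.
  -
    apply abelard_step.
    + unfold terminal; simpl; rewrite Hs; reflexivity.
    + unfold eloise_turn; simpl; rewrite Hs; reflexivity.
    + intros [v' p' c'] HM. unfold move in HM; simpl in HM; rewrite Hs in HM.
      destruct HM as [Hr [-> Hcl]].
      assert (c' = c) by (apply functional_extensionality; exact Hcl). subst c'.
      split; [|eapply desc_smaller; eauto].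
      exists psi. simpl. rewrite sub_app, Hs. split; auto.
      erewrite env_desc by (eauto; reflexivity). apply Hsat; auto.
    + intros; apply IH; auto.
  -
    apply (char_mu R V psi n (sat_mono R V psi)) in Hsat.
    destruct (lfp_FSg R V lt Hwf Htri Hninj _ _ _ _ Hsat) as [b Hf].
    apply eloise_step.
    + unfold terminal; simpl; rewrite Hs; reflexivity.
    + unfold eloise_turn; simpl; rewrite Hs; reflexivity.
    + exists (mkpos v (p ++ [false]) (clk_bind c p b)). split; [|split].
      * unfold move; simpl; rewrite Hs. split; auto. split; auto. exists b. intro; reflexivity.
      * exists psi. simpl. rewrite sub_app, Hs. split; auto.
        erewrite env_bind by (eauto; reflexivity). simpl. exact Hf.
      * eapply desc_smaller; eauto. intros r Hr. unfold clk_bind. rewrite path_eqb_short; auto.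
    + intros; apply IH; auto.
  -
    apply (char_nu R V psi n (sat_mono R V psi)) in Hsat.
    apply abelard_step.
    + unfold terminal; simpl; rewrite Hs; reflexivity.
    + unfold eloise_turn; simpl; rewrite Hs; reflexivity.
    + intros [v' p' c'] HM. unfold move in HM; simpl in HM; rewrite Hs in HM.
      destruct HM as [-> [-> [b Hcl]]].
      assert (c' = clk_bind c p b) by (apply functional_extensionality; exact Hcl). subst c'.
      split.
      * exists psi. simpl. rewrite sub_app, Hs. split; auto.
        erewrite env_bind by (eauto; reflexivity). simpl. apply gfp_FTg; auto.
      * eapply desc_smaller; eauto. intros r Hr. unfold clk_bind. rewrite path_eqb_short; auto.
    + intros; apply IH; auto.
Qed.

Lemma bwd (sg : pos W G -> pos W G) : forall P, ewins R V lt phi sg P ->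
  forall psi, sub phi (pp P) = Some psi -> sat R V (E (pp P) (pc P)) psi (pw P).
Proof.
  intros P H. induction H as [P bb Ht Hb | P Ht Htu Hm Hw IH | P Ht Htu Hall IH].
  - destruct P as [v p c]; simpl. intros psi Hs.
    unfold terminal in Ht; simpl in Ht; rewrite Hs in Ht.
    destruct psi; simpl in Ht; try discriminate; try (inversion Ht; subst; exact Hb).
    destruct (rf phi p n); [discriminate|]. inversion Ht; subst. contradiction.
  - destruct P as [v p c]; simpl. intros psi Hs. clear Hw.
    revert Hm IH. generalize (sg (mkpos v p c)). intros [v' p' c'] Hm IH. simpl in IH.
    unfold move in Hm; simpl in Hm; rewrite Hs in Hm.
    unfold eloise_turn in Htu; simpl in Htu; rewrite Hs in Htu.
    unfold terminal in Ht; simpl in Ht; rewrite Hs in Ht.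
    destruct psi; try discriminate; try contradiction.
    +
      destruct (rf phi p n) eqn:Hr; [|contradiction].
      destruct (rf_spec _ _ _ _ Hr) as (g & a & t & Hq & Hb & Hc & Hp).
      rewrite Hq in Htu. simpl. unfold E. erewrite env_rf by eauto.
      destruct g; simpl in Hb; try discriminate; apply Nat.eqb_eq in Hb; subst n0;
        simpl in Hc; inversion Hc; subst g; try discriminate.
      simpl. unfold upd. rewrite Nat.eqb_refl.
      destruct Hm as [-> [-> [b [Hlt Hcl]]]].
      assert (c' = clk_loop c l b) by (apply functional_extensionality; exact Hcl). subst c'.
      specialize (IH a). rewrite sub_app, Hq in IH. specialize (IH eq_refl).
      unfold E in IH. erewrite env_loop in IH by eauto. simpl in IH.
      destruct (c l) as [gm|]; simpl in Hlt |- *.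
      * apply Sg_iff. exists b. split; auto.
      * eapply FSg_lfp. exact IH.
    +
      destruct Hm as [-> [Hcl Hpp]].
      assert (c' = c) by (apply functional_extensionality; exact Hcl). subst c'.
      destruct Hpp as [-> | ->].
      * left. specialize (IH psi1). rewrite sub_app, Hs in IH. specialize (IH eq_refl).
        erewrite env_desc in IH by (eauto; reflexivity). exact IH.
      * right. specialize (IH psi2). rewrite sub_app, Hs in IH. specialize (IH eq_refl).
        erewrite env_desc in IH by (eauto; reflexivity). exact IH.
    +
      destruct Hm as [Hr [-> Hcl]].
      assert (c' = c) by (apply functional_extensionality; exact Hcl). subst c'.
      exists v'. split; auto. specialize (IH psi). rewrite sub_app, Hs in IH. specialize (IH eq_refl).
      erewrite env_desc in IH by (eauto; reflexivity). exact IH.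
    +
      destruct Hm as [-> [-> [b Hcl]]].
      assert (c' = clk_bind c p b) by (apply functional_extensionality; exact Hcl). subst c'.
      specialize (IH psi). rewrite sub_app, Hs in IH. specialize (IH eq_refl).
      erewrite env_bind in IH by (eauto; reflexivity). simpl in IH.
      apply (char_mu R V psi n (sat_mono R V psi)). eapply FSg_lfp. exact IH.
  - destruct P as [v p c]; simpl. intros psi Hs. simpl in IH.
    unfold eloise_turn in Htu; simpl in Htu; rewrite Hs in Htu.
    unfold terminal in Ht; simpl in Ht; rewrite Hs in Ht.
    destruct psi; try discriminate.
    +
      destruct (rf phi p n) eqn:Hr; [|discriminate].
      destruct (rf_spec _ _ _ _ Hr) as (g & a & t & Hq & Hb & Hc & Hp).
      rewrite Hq in Htu. simpl. unfold E. erewrite env_rf by eauto.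
      destruct g; simpl in Hb; try discriminate; apply Nat.eqb_eq in Hb; subst n0;
        simpl in Hc; inversion Hc; subst g; try discriminate.
      simpl. unfold upd. rewrite Nat.eqb_refl.
      assert (Hstep : forall b, clt lt (Some b) (c l) ->
                Fop R V (E l c) n a (Tg R V lt Hwf (E l c) n a b) v).
      { intros b Hlt. specialize (IH (mkpos v (l ++ [false]) (clk_loop c l b))).
        simpl in IH. rewrite sub_app, Hq in IH.
        assert (HM : move R lt phi (mkpos v p c) (mkpos v (l ++ [false]) (clk_loop c l b))).
        { unfold move; simpl; rewrite Hs, Hr. split; auto. split; auto. exists b; split; auto. }
        specialize (IH HM a eq_refl). unfold E in IH. erewrite env_loop in IH by eauto. exact IH. }
      destruct (c l) as [gm|]; simpl in Hstep |- *.
      * apply (proj2 (Tg_iff R V lt Hwf _ _ _ _ _)). exact Hstep.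
      * apply (FTg_gfp R V lt Hwf Htri Hninj). intro b. apply Hstep. exact I.
    +
      split.
      * specialize (IH (mkpos v (p ++ [false]) c)). simpl in IH.
        assert (HM : move R lt phi (mkpos v p c) (mkpos v (p ++ [false]) c)).
        { unfold move; simpl; rewrite Hs. auto. }
        specialize (IH HM psi1). rewrite sub_app, Hs in IH. specialize (IH eq_refl).
        erewrite env_desc in IH by (eauto; reflexivity). exact IH.
      * specialize (IH (mkpos v (p ++ [true]) c)). simpl in IH.
        assert (HM : move R lt phi (mkpos v p c) (mkpos v (p ++ [true]) c)).
        { unfold move; simpl; rewrite Hs. auto. }
        specialize (IH HM psi2). rewrite sub_app, Hs in IH. specialize (IH eq_refl).
        erewrite env_desc in IH by (eauto; reflexivity). exact IH.
    +
      intros u Hu. specialize (IH (mkpos u (p ++ [false]) c)). simpl in IH.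
      assert (HM : move R lt phi (mkpos v p c) (mkpos u (p ++ [false]) c)).
      { unfold move; simpl; rewrite Hs. auto. }
      specialize (IH HM psi). rewrite sub_app, Hs in IH. specialize (IH eq_refl).
      erewrite env_desc in IH by (eauto; reflexivity). exact IH.
    +
      apply (char_nu R V psi n (sat_mono R V psi)). apply (FTg_gfp R V lt Hwf Htri Hninj).
      intro b. specialize (IH (mkpos v (p ++ [false]) (clk_bind c p b))). simpl in IH.
      assert (HM : move R lt phi (mkpos v p c) (mkpos v (p ++ [false]) (clk_bind c p b))).
      { unfold move; simpl; rewrite Hs. split; auto. split; auto. exists b. intro; reflexivity. }
      specialize (IH HM psi). rewrite sub_app, Hs in IH. specialize (IH eq_refl).
      erewrite env_bind in IH by (eauto; reflexivity). exact IH.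
Qed.

End GameProof.


Theorem mainTheorem5 (W : Type) (R : W -> W -> Prop) (V : nat -> W -> Prop)
  (G : Type) (lt : G -> G -> Prop) (HG : is_succ_card_of W G lt)
  (w : W) (phi : form) (Hphi : sentence phi) :
  models R V w phi <-> game_holds R V lt phi w.
Proof.
  destruct HG as [Hirr [Htr [Htri [Hwf [Hseg Hninj]]]]].
  split.
  - intro H. exists (sigma R V lt Hwf phi).
    apply (fwd R V lt Hwf Htri Hninj phi Hphi). exists phi. simpl. split; [reflexivity | exact H].
  - intros [sg Hw]. exact (bwd R V lt Hwf Htri Hninj phi sg _ Hw phi eq_refl).
Qed.
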